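(* Let $q$ be a prime power, $m\ge1$, $1\le k\le n$, $g_1,\dots,g_n\in\mathbb{F}_{q^m}$ linearly independent over $\mathbb{F}_q$, $\mathbf g=(g_1,\dots,g_n)$, $\mathbf r\in\mathbb{F}_{q^m}^n$. Then Algorithm 2 (described in the context), given $k$, $\Pi_{\mathbf g}$ and $\Lambda_{\mathbf g,\mathbf r}$, has computational complexity order $\mathcal{O}_{q^m}(n^2)$.
   Context: Write $[i]:=q^i$. A $q$-linearized polynomial is $f(x)=\sum_{i=0}^{d}a_ix^{[i]}$, $a_i\in\mathbb{F}_{q^m}$; if $a_d\ne0$, $d=\mathrm{qdeg}(f)$ ($\mathrm{qdeg}(0)=-\infty$). $\mathcal{L}_q(x,q^m)$ is the ring of these under addition and composition $\circ$. $\Pi_{\mathbf g}(x)=\prod_{u\in\langle g_1,\dots,g_n\rangle}(x-u)$ ($\mathbb{F}_q$-span), of $q$-degree $n$. For $\mathbf r=(r_1,\dots,r_n)$, $\Lambda_{\mathbf g,\mathbf r}(x)=\sum_{i=1}^n(-1)^{n-i}r_i\det(\mathfrak D_i(\mathbf g,x))/\det(M_n(g_1,\dots,g_n))$ ($M_n(v_1,\dots,v_s)$ the $n\times s$ matrix with $(j,l)$ entry $v_l^{[j-1]}$; $\mathfrak D_i(\mathbf g,x)$ is $M_n(g_1,\dots,g_n,x)$ without column $i$), of $q$-degree $<n$. Algorithm 2: $P_0=\Pi_{\mathbf g}$, $K_0=0$, $N_0=-\Lambda_{\mathbf g,\mathbf r}$, $D_0=x$, $j=0$; while $\mathrm{qdeg}(D_j)+k-1<\mathrm{qdeg}(N_j)$: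 compute by right symbolic division $q_j,r_j\in\mathcal{L}_q(x,q^m)$ with $P_j=q_j\circ N_j+r_j$ and $\mathrm{qdeg}(r_j)<\mathrm{qdeg}(N_j)$; set $P_{j+1}=N_j$, $K_{j+1}=D_j$, $N_{j+1}=r_j$, $D_{j+1}=K_j-q_j\circ D_j$; $j:=j+1$. Return $[P_j\ \ K_j]$ and $[N_j\ \ D_j]$. Complexity conventions: elements of $\mathbb{F}_{q^m}$ are stored w.r.t. a normal basis of $\mathbb{F}_{q^m}$ over $\mathbb{F}_q$, so $q$-th powers are free; $\mathcal{O}_{q^m}(\cdot)$ counts arithmetic operations in $\mathbb{F}_{q^m}$. *)

(* Defs.v *)
From HB Require Import structures.
From mathcomp Require Import all_boot all_order all_algebra.
Set Implicit Arguments. Unset Strict Implicit. Unset Printing Implicit Defensive.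
Import GRing.Theory.
Local Open Scope ring_scope.

(* A q-linearized polynomial  f = sum_i a_i x^[i]  over F is
   stored as the ordinary polynomial  sum_i a_i X^i  (its coefficient list);
   qdeg f = (size f).-1, and qdeg 0 = -oo corresponds to size 0.
   Field elements are in a normal basis, so q^i-th powers (frob) are free.
   Every other arithmetic operation of F (+, -, *, inverse, negation) costs 1. *)

Section Linearized.
Variables (F : fieldType) (q : nat).

Definition frob (i : nat) (x : F) : F := x ^+ (q ^ i).

Definition lcomp (A B : {poly F}) : {poly F} :=
  \sum_(i < size A) (A`_i *: (map_poly (frob i) B * 'X^i)).

(* cost of schoolbook composition: one product and one addition per pair *)
Definition lcomp_cost (A B : {poly F}) : nat := 2 * (size A * size B).

(* Right symbolic division of R by N (with invl = inverse of lead coef of N):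
   each step eliminates the leading term of R using  a x^[t] o N, where
   a = lead(R) * invl^[t]  (1 multiplication; frob is free), then subtracts
   a * N_j^[t] from R_{t+j} for all j  (2 * size N operations). *)
Fixpoint rdiv_loop (fuel : nat) (N : {poly F}) (invl : F) (Q R : {poly F})
    (c : nat) : {poly F} * {poly F} * nat :=
  match fuel with
  | 0 => (Q, R, c)
  | fuel'.+1 =>
    if (size R < size N)%N then (Q, R, c) else
    let t := (size R - size N)%N in
    let a := lead_coef R * frob t invl in
    rdiv_loop fuel' N invl (Q + a *: 'X^t)
      (R - a *: (map_poly (frob t) N * 'X^t)) (c + 1 + 2 * size N)%N
  end.

(* P = Q o N + R ; returns (Q, R, cost); the inversion of lead(N) costs 1 *)
Definition rdiv (P N : {poly F}) : {poly F} * {poly F} * nat :=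
  rdiv_loop (size P) N (lead_coef N)^-1 0 P 1.

(* loop condition  qdeg(D) + k - 1 < qdeg(N)  with qdeg 0 = -oo *)
Definition alg2_cond (k : nat) (N D : {poly F}) : bool :=
  if D == 0 then N != 0 else ((size D).-1 + k < size N)%N.

Fixpoint alg2_loop (fuel k : nat) (P K N D : {poly F}) (c : nat)
    : {poly F} * {poly F} * {poly F} * {poly F} * nat :=
  match fuel with
  | 0 => (P, K, N, D, c)
  | fuel'.+1 =>
    if alg2_cond k N D then
      let: (Qj, Rj, cd) := rdiv P N in
      let QD := lcomp Qj D in
      alg2_loop fuel' k N D Rj (K - QD)
        (c + cd + lcomp_cost Qj D + maxn (size K) (size QD))%N
    else (P, K, N, D, c)
  end.

(* Algorithm 2 on inputs k, Pi, Lambda: P0 = Pi, K0 = 0, N0 = -Lambda,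
   D0 = x; the negation of Lambda costs size Lambda operations.
   The fuel size Pi exceeds the number of iterations (qdeg N strictly
   decreases). *)
Definition alg2 (k : nat) (Pi Lam : {poly F}) :=
  alg2_loop (size Pi) k Pi 0 (- Lam) 'X (size Lam).

Definition alg2_cost (k : nat) (Pi Lam : {poly F}) : nat :=
  (alg2 k Pi Lam).2.

Variable n : nat.

Definition Fq_span (F' : finFieldType) (q' : nat) (g : 'I_n -> F') : {set F'} :=
  [set u | [exists c : {ffun 'I_n -> F'},
      [forall i, c i ^+ q' == c i] && (u == \sum_(i < n) c i * g i)]].

Definition moore (g : 'I_n -> F) : 'M[F]_n := \matrix_(j < n, l < n) (g l) ^+ (q ^ j).

(* columns of M_n(g_1,..,g_n,x) as polynomials in x *)
Definition ext_col (g : 'I_n -> F) (l : 'I_n.+1) : {poly F} :=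
  if unlift ord_max l is Some l' then (g l')%:P else 'X.

(* D_i(g,x): M_n(g_1..g_n,x) without column i *)
Definition Dmat (g : 'I_n -> F) (i : 'I_n) : 'M[{poly F}]_n :=
  \matrix_(j < n, l < n) (ext_col g (lift (widen_ord (leqnSn n) i) l)) ^+ (q ^ j).

(* Lambda_{g,r} as an ordinary polynomial in x *)
Definition Lambda_full (g r : 'I_n -> F) : {poly F} :=
  \sum_(i < n) (((-1) ^+ (n - 1 - i) * r i / \det (moore g)) *: \det (Dmat g i)).

(* its q-linearized coefficient vector (q-degree < n) *)
Definition Lambda_lin (g r : 'I_n -> F) : {poly F} :=
  \poly_(j < n) (Lambda_full g r)`_(q ^ j).
End Linearized.

Definition Pi_full (F : finFieldType) (q n : nat) (g : 'I_n -> F) : {poly F} :=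
  \prod_(u in Fq_span q g) ('X - u%:P).

Definition Pi_lin (F : finFieldType) (q n : nat) (g : 'I_n -> F) : {poly F} :=
  \poly_(j < n.+1) (Pi_full q g)`_(q ^ j).

Definition prime_power (q : nat) : Prop :=
  exists p e : nat, prime p /\ (0 < e)%N /\ q = (p ^ e)%N.

Definition Fq_lin_indep (F : finFieldType) (q n : nat) (g : 'I_n -> F) : Prop :=
  forall c : 'I_n -> F, (forall i, c i ^+ q = c i) ->
    \sum_(i < n) c i * g i = 0 -> forall i, c i = 0.

(* Main.v *)
Require Import Defs.
From mathcomp Require Import all_boot all_order all_algebra.
From mathcomp Require Import zify.
Set Implicit Arguments. Unset Strict Implicit. Unset Printing Implicit Defensive.
Import GRing.Theory.
Local Open Scope ring_scope.

Section Ar.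
Local Open Scope nat_scope.
Lemma loop_arith (M p n d kk r qs l dd cd c x : nat) :
 (0 < n)%N -> r < n -> qs <= p + 1 - n -> cd <= 1 + (p + 1 - n) * (1 + 2 * n) ->
 l <= (qs + d).-1 -> dd <= maxn kk l -> d + p <= M + 3 -> d + n <= M + 3 -> kk + n <= M + 3 ->
 x <= c + cd + 2 * (qs * d) + maxn kk l + 4 * (M + 4) * (maxn n r + 2 * r) ->
 [/\ dd + n <= M + 3, dd + r <= M + 3, d + r <= M + 3 &
     x <= c + 4 * (M + 4) * (maxn p n + 2 * n)].
Proof.
move=> n0 hr hq hcd hl hdd I1 I2 I3 hx.
split; [lia|lia|lia|].
set s := p + 1 - n.
have e1 : s * (1 + 2 * n) <= s * (2 * M + 7) by apply: leq_mul => //; lia.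
have e2 : qs * d <= s * (M + 3) by apply: leq_mul; lia.
have e3 : maxn n r + 2 * r + s + 1 <= maxn p n + 2 * n by rewrite /s; lia.
have e4 := leq_mul (leqnn (4 * (M + 4))) e3.
have e5 : l <= 2 * M + 6 by lia.
rewrite !mulnDr in e4. lia.
Qed.
End Ar.

Section Aux.
Variables (F : fieldType) (q : nat).
Hypothesis q_gt0 : (0 < q)%N.

Lemma frob0 t : frob q t (0 : F) = 0.
Proof. by rewrite /frob expr0n expn_eq0 eqn0Ngt q_gt0. Qed.

Lemma size_lcomp (A B : {poly F}) : (size (lcomp q A B) <= (size A + size B).-1)%N.
Proof.
rewrite /lcomp; apply: (big_ind (fun p : {poly F} => size p <= _)%N); first by rewrite size_poly0.
  by move=> x y hx hy; apply: leq_trans (size_polyD _ _) _; rewrite geq_max hx hy.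
move=> i _; apply: leq_trans (size_scale_leq _ _) _.
apply: leq_trans (size_polyMleq _ _) _; rewrite size_polyXn.
have := size_poly (size B) (fun j => frob q i B`_j).
rewrite -/(map_poly _ B) => hB.
have hi := ltn_ord i. lia.
Qed.

Lemma rdiv_step (N R : {poly F}) t a : N != 0 -> (size N <= size R)%N ->
  t = (size R - size N)%N ->
  a = lead_coef R * frob q t (lead_coef N)^-1 ->
  (size (R - a *: (map_poly (frob q t) N * 'X^t))%R < size R)%N.
Proof.
move=> N0 hNR et ea.
have sN : (0 < size N)%N by rewrite size_poly_gt0.
have sR : (0 < size R)%N by lia.
rewrite -(prednK sR) ltnS; apply/leq_sizeP => j hj.
rewrite coefB coefZ coefMXn.
have -> : (j < t)%N = false by apply/negbTE; rewrite -leqNgt; lia.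
rewrite coef_map_id0 ?frob0 //.
have [ej|nej] := eqVneq j (size R).-1.
  have -> : (j - t = (size N).-1)%N by lia.
  rewrite ej -!lead_coefE ea /frob -mulrA -exprMn mulVf ?lead_coef_eq0 //.
  by rewrite expr1n mulr1 subrr.
have hj' : (size R <= j)%N by lia.
have hN : (size N <= j - t)%N by lia.
by rewrite (nth_default 0 hj') (nth_default 0 hN) frob0 mulr0 subr0.
Qed.
Lemma cost_arith (r2 r n c c' : nat) : (r2 < r)%N -> (n <= r)%N ->
  (c' <= c + 1 + 2 * n + (r2 + 1 - n) * (1 + 2 * n))%N ->
  (c' <= c + (r + 1 - n) * (1 + 2 * n))%N.
Proof.
move=> h1 h2 h3; apply: leq_trans h3 _.
have h4 : (r2 + 1 - n <= r - n)%N by lia.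
have h5 := leq_mul h4 (leqnn (1 + 2 * n)).
have -> : (r + 1 - n = (r - n).+1)%N by lia.
rewrite mulSn; lia.
Qed.

Lemma rdiv_loop_spec fuel (N : {poly F}) invl S : N != 0 -> invl = (lead_coef N)^-1 ->
  forall (Q R Q' R' : {poly F}) (c c' : nat), (size R < fuel + size N)%N -> (size R <= S)%N ->
  (size Q <= S + 1 - size N)%N ->
  rdiv_loop q fuel N invl Q R c = (Q', R', c') ->
  [/\ (size R' < size N)%N, (size Q' <= S + 1 - size N)%N &
      (c' <= c + (size R + 1 - size N) * (1 + 2 * size N))%N].
Proof.
move=> N0 einvl; elim: fuel => [|fuel IH] Q R Q' R' c c' hf hS hQ /=.
  by case=> <- <- <-; split => //; rewrite leq_addr.
case: ifP => hlt.
  by case=> <- <- <-; split => //; rewrite leq_addr.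
move/negbT: hlt; rewrite -leqNgt => hNR.
set t := (size R - size N)%N.
set a := lead_coef R * frob q t invl.
have hR := @rdiv_step N R t a N0 hNR erefl.
have {}hR := hR (ltac:(by rewrite /a einvl)).
move=> /IH [] //.
- by apply: leq_trans hR _; move: hf; rewrite addSn ltnS. 
- by apply: leq_trans (ltnW hR) hS.
- apply: leq_trans (size_polyD _ _) _; rewrite geq_max hQ /=.
  have ht : (t.+1 <= S + 1 - size N)%N.
    rewrite /t; set sN := size N in hNR hQ *; set sR := size R in hS hNR *; lia.
  by apply: leq_trans (size_scale_leq _ _) _; rewrite size_polyXn.
move=> -> -> hc; split => //; exact: cost_arith hR hNR hc.
Qed.

Lemma rdiv_spec (P N : {poly F}) Q' R' c' : N != 0 -> rdiv q P N = (Q', R', c') ->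
  [/\ (size R' < size N)%N, (size Q' <= size P + 1 - size N)%N &
      (c' <= 1 + (size P + 1 - size N) * (1 + 2 * size N))%N].
Proof.
move=> N0 /rdiv_loop_spec => /(_ (size P) N0 erefl) [] //.
- by rewrite -{1}(addn0 (size P)) ltn_add2l size_poly_gt0.
- by rewrite size_poly0.
Qed.
Lemma size_lcompB (K Q D : {poly F}) :
  (size (K - lcomp q Q D)%R <= maxn (size K) (size (lcomp q Q D)))%N.
Proof. by rewrite -(size_polyN (lcomp q Q D)) size_polyD. Qed.

Lemma alg2_loop_spec k M fuel : forall (P K N D : {poly F}) c,
  (size D + size P <= M + 3)%N -> (size D + size N <= M + 3)%N ->
  (size K + size N <= M + 3)%N ->
  ((alg2_loop q fuel k P K N D c).2 <=
     c + 4 * (M + 4) * (maxn (size P) (size N) + 2 * size N))%N.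
Proof.
elim: fuel => [|fuel IH] P K N D c I1 I2 I3 /=; first exact: leq_addr.
case: ifP => hc; last exact: leq_addr.
have N0 : N != 0.
  move: hc; rewrite /alg2_cond; case: ifP => // _ h.
  by rewrite -size_poly_gt0; apply: leq_ltn_trans h.
have n0 : (0 < size N)%N by rewrite size_poly_gt0.
case E: (rdiv q P N) => [[Qj Rj] cd].
have [hR hQ hcd] := rdiv_spec N0 E.
have hl := size_lcomp Qj D.
have hdd := size_lcompB K Qj D.
have hx := IH N D Rj (K - lcomp q Qj D)%R
  (c + cd + lcomp_cost Qj D + maxn (size K) (size (lcomp q Qj D)))%N.
have [J1 J2 J3 _] := loop_arith (x := 0) (c := 0) n0 hR hQ hcd hl hdd I1 I2 I3 (leq0n _).
have [_ _ _ H] := loop_arith n0 hR hQ hcd hl hdd I1 I2 I3 (hx J1 J2 J3).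
by rewrite /=.
Qed.
End Aux.

Lemma final_arith (n L P x : nat) : (1 <= n)%N -> (L <= n)%N -> (P <= n + 1)%N ->
  (x <= L + 4 * (n + 4) * (maxn P L + 2 * L))%N -> (x <= 81 * n ^ 2)%N.
Proof.
move=> h1 h2 h3 hx; apply: leq_trans hx _.
have e1 : (maxn P L + 2 * L <= 4 * n)%N by lia.
have e2 : (4 * (n + 4) <= 4 * (5 * n))%N by lia.
have e3 := leq_mul e2 e1.
have e4 : (n <= n * n)%N by rewrite leq_pmulr.
rewrite expnS expn1; nia.
Qed.

Theorem proposition38 :
  exists C : nat,
    forall (q m n k : nat) (F : finFieldType) (g r : 'I_n -> F),
      prime_power q -> (1 <= m)%N -> #|F| = (q ^ m)%N ->
      (1 <= k)%N -> (k <= n)%N ->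
      Fq_lin_indep q g ->
      (alg2_cost q k (Pi_lin q g) (Lambda_lin q g r) <= C * n ^ 2)%N.
Proof.
exists 81 => q m n k F g r [p [e [pp [e0 ->]]]] _ _ k1 kn _.
have q0 : (0 < p ^ e)%N by rewrite expn_gt0 prime_gt0.
have hP : (size (Pi_lin (p ^ e) g) <= n + 1)%N by rewrite addn1 size_poly.
have hL : (size (Lambda_lin (p ^ e) g r) <= n)%N by apply: size_poly.
rewrite /alg2_cost /alg2.
apply: (final_arith (L := size (Lambda_lin (p ^ e) g r)) (P := size (Pi_lin (p ^ e) g)) _ hL hP).
  exact: leq_trans kn.
rewrite -(size_polyN (Lambda_lin (p ^ e) g r)).
apply: alg2_loop_spec => //; rewrite ?size_polyX ?size_polyN ?size_poly0.
- rewrite (_ : 2%R = 2%N) // (_ : (n + 3 = 2 + (n + 1))%N); last lia.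
  by rewrite leq_add2l.
- rewrite (_ : 2%R = 2%N) // (_ : (n + 3 = 2 + (n + 1))%N); last lia.
  by rewrite leq_add2l (leq_trans hL) // leq_addr.
- by rewrite add0n (leq_trans hL) // leq_addr.
Qed.
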